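(* If a presheaf $P\colon\mathbb{O}\to\mathbf{Set}$ preserves pullbacks, then so do $\mathcal{P}_f P$, $\Delta P$ and $BP$. That is, $\mathcal{P}_f$, $\Delta$ and $B$ restrict to endofunctors on the full subcategory of $\mathbf{Set}^{\mathbb{O}}$ formed by pullback-preserving presheaves.
   Context: Fix a finite set $Act$ of action labels. An $Act$-labelled poset is $O=(X_O,\preccurlyeq_O,l_O)$ with partial order $\preccurlyeq_O$ and $l_O\colon X_O\to Act$; $|O|=\{(x,l_O(x))\}$. Morphisms preserve order and labels; order-embeddings also reflect order. $\mathbb{O}$ is the category whose objects are chosen representatives of the isomorphism classes of finite $Act$-labelled posets and whose morphisms are order-embeddings. $\boldsymbol{\delta}\colon\mathbb{O}\to\mathbb{O}$: $\boldsymbol{\delta}(O)$ is (the representative of) the poset obtained from $O$ by adding, for each antichain $K\subseteq|O|$ (including $\emptyset$) and each $a\in Act$, a fresh event $new(O,K,a)$ labelled $a$ above exactly the elements of $K$ (reflexive-transitively closed); for an order-embedding $\sigma\colon O\to O'$, $\boldsymbol{\delta}(\sigma)$ acts as $\sigma$ on old events and sends $new(O,K,a)$ to $new(O',\sigma(K),a)$. $\mathbf{Set}^{\mathbb{O}}$: functors $\mathbb{O}\to\mathbf{Set}$. $\mathcal{E}(O)=|O|$, with renaming on morphisms. $\mathcal{P}_f$: pointwise finite powerset (direct images). $\Delta P=P\circ\boldsymbol{\delta}$. $\mathcal{L}(O)=Act\times\mathcal{P}_f(\mathcal{E}(O))$. $BP=\mathcal{P}_f(\mathcal{L}\times\Delta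 P)$, products pointwise. *)

(* Defs.v *)
From HB Require Import structures.
From mathcomp Require Import all_boot.
From mathcomp Require Import boolp classical_sets cardinality.
Set Implicit Arguments. Unset Strict Implicit. Unset Printing Implicit Defensive.

Section Defs.
Variable Act : finType.

Record LPoset := {
  carrier :> finType;
  ple : rel carrier;
  ple_refl : forall x, ple x x;
  ple_anti : forall x y, ple x y -> ple y x -> x = y;
  ple_trans : forall x y z, ple x y -> ple y z -> ple x z;
  lab : carrier -> Act }.

Record Hom (O O' : LPoset) := {
  hfun :> O -> O';
  hemb : forall x y, ple (hfun x) (hfun y) = ple x y;
  hlab : forall x, lab (hfun x) = lab x }.

Definition antichain (O : LPoset) (K : {set O}) : bool :=
  [forall x in K, [forall y in K, ple x y ==> (x == y)]].

Definition newT (O : LPoset) : finType := ({K : {set O} | antichain K} * Act)%type.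

(* The carrier of delta(O): old events + one fresh event new(O,K,a) per antichain K and label a. *)
Definition dcar (O : LPoset) : finType := (O + newT O)%type.

(* Order of delta(O): reflexive-transitive closure of (order of O) together with
   k <= new(O,K,a) for k in K.  Explicitly: *)
Definition dle (O : LPoset) : rel (dcar O) := fun u v =>
  match u, v with
  | inl x, inl y => ple x y
  | inl x, inr n => [exists k in val n.1, ple x k]
  | inr _, inl _ => false
  | inr n, inr m => n == m
  end.

Definition dlab (O : LPoset) (u : dcar O) : Act :=
  match u with inl x => lab x | inr n => n.2 end.

Lemma dle_refl O (x : dcar O) : dle x x.
Proof. by case: x => [x|n] /=; rewrite ?ple_refl. Qed.

Lemma dle_anti O (x y : dcar O) : dle x y -> dle y x -> x = y.
Proof.
case: x => [x|n]; case: y => [y|m] //=.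
- by move=> h1 h2; rewrite (ple_anti h1 h2).
- by move/eqP->.
Qed.

Lemma dle_trans O (x y z : dcar O) : dle x y -> dle y z -> dle x z.
Proof.
case: x => [x|n]; case: y => [y|m]; case: z => [z|p] //=.
- exact: ple_trans.
- move=> hxy /existsP[k /andP[kK hyk]]; apply/existsP; exists k.
  by rewrite kK (ple_trans hxy hyk).
- by move=> h /eqP <-.
- by move=> /eqP -> .
Qed.

Definition delta (O : LPoset) : LPoset :=
  @Build_LPoset (dcar O) (@dle O) (@dle_refl O) (@dle_anti O) (@dle_trans O) (@dlab O).

Lemma hom_inj O O' (s : Hom O O') : injective s.
Proof.
move=> x y e; apply: ple_anti.
- by rewrite -(hemb s) e ple_refl.
- by rewrite -(hemb s) e ple_refl.
Qed.

Lemma antichain_image O O' (s : Hom O O') (K : {set O}) :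
  antichain K -> antichain [set s x | x in K].
Proof.
move=> /forallP aK; apply/forallP => u; apply/implyP => /imsetP[x xK ->].
apply/forallP => v; apply/implyP => /imsetP[y yK ->].
rewrite hemb; apply/implyP => hxy.
have := aK x; rewrite xK /= => /forallP /(_ y); rewrite yK hxy /= => /eqP ->.
exact: eqxx.
Qed.

Definition dnew O O' (s : Hom O O') (n : newT O) : newT O' :=
  (exist _ [set s x | x in val n.1] (antichain_image s (valP n.1)), n.2).

Definition dfun O O' (s : Hom O O') (u : dcar O) : dcar O' :=
  match u with inl x => inl (s x) | inr n => inr (dnew s n) end.

Lemma dfun_emb O O' (s : Hom O O') (x y : dcar O) :
  dle (dfun s x) (dfun s y) = dle x y.
Proof.
case: x => [x|n]; case: y => [y|m] //=.
- exact: hemb.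
- apply/existsP/existsP => [[k /andP[/imsetP[k' k'K ->] h]]|[k /andP[kK h]]].
  + by exists k'; rewrite k'K -(hemb s).
  + by exists (s k); rewrite imset_f //= hemb.
- apply/eqP/eqP => [e|-> //].
  case: n m e => [[K aK] a] [[L aL] b] [e1 e2]; subst b.
  congr pair; apply: val_inj => /=.
  by apply: (imset_inj (@hom_inj _ _ s)).
Qed.

Lemma dfun_lab O O' (s : Hom O O') (x : dcar O) : dlab (dfun s x) = dlab x.
Proof. by case: x => [x|n] //=; rewrite hlab. Qed.

Definition deltaH O O' (s : Hom O O') : Hom (delta O) (delta O') :=
  @Build_Hom (delta O) (delta O') (dfun s) (@dfun_emb O O' s) (@dfun_lab O O' s).

(* Presheaves O -> Set (data); functoriality is the predicate is_functor. *)
Record presheaf := {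
  pobj :> LPoset -> Type;
  pmap : forall O O', Hom O O' -> pobj O -> pobj O' }.
Arguments pmap : clear implicits.
Arguments pmap p {O O'}.

Definition is_functor (P : presheaf) : Prop :=
  (forall O (f : Hom O O), (forall x, f x = x) -> forall y, pmap P f y = y) /\
  (forall O1 O2 O3 (f : Hom O1 O2) (g : Hom O2 O3) (h : Hom O1 O3),
     (forall x, h x = g (f x)) -> forall y, pmap P h y = pmap P g (pmap P f y)).

Definition is_pullback (A B C D : LPoset) (p1 : Hom A B) (p2 : Hom A C)
  (f : Hom B D) (g : Hom C D) : Prop :=
  (forall a, f (p1 a) = g (p2 a)) /\
  forall (X : LPoset) (h1 : Hom X B) (h2 : Hom X C),
    (forall x, f (h1 x) = g (h2 x)) ->
    (exists u : Hom X A, forall x, p1 (u x) = h1 x /\ p2 (u x) = h2 x) /\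
    (forall u u' : Hom X A,
       (forall x, p1 (u x) = h1 x /\ p2 (u x) = h2 x) ->
       (forall x, p1 (u' x) = h1 x /\ p2 (u' x) = h2 x) ->
       forall x, u x = u' x).

Definition set_pullback (A B C D : Type) (p1 : A -> B) (p2 : A -> C)
  (f : B -> D) (g : C -> D) : Prop :=
  (forall a, f (p1 a) = g (p2 a)) /\
  forall b c, f b = g c -> exists! a, p1 a = b /\ p2 a = c.

Definition preserves_pullbacks (P : presheaf) : Prop :=
  forall (A B C D : LPoset) (p1 : Hom A B) (p2 : Hom A C) (f : Hom B D) (g : Hom C D),
    is_pullback p1 p2 f g ->
    set_pullback (pmap P p1) (pmap P p2) (pmap P f) (pmap P g).

Local Open Scope classical_set_scope.
Definition Pfin (T : Type) := {A : set T | finite_set A}.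

Definition Pfin_map (T T' : Type) (h : T -> T') (A : Pfin T) : Pfin T' :=
  exist _ (h @` (proj1_sig A)) (finite_image h (proj2_sig A)).

Definition PfP (P : presheaf) : presheaf :=
  @Build_presheaf (fun O => Pfin (P O)) (fun O O' s => Pfin_map (pmap P s)).

Definition DeltaP (P : presheaf) : presheaf :=
  @Build_presheaf (fun O => P (delta O)) (fun O O' s => pmap P (deltaH s)).

(* E(O) = |O| (events, whose label is determined), L(O) = Act x Pf(E(O)). *)
Definition Lobj (O : LPoset) : Type := (Act * Pfin O)%type.
Definition Lmap O O' (s : Hom O O') (l : Lobj O) : Lobj O' := (l.1, Pfin_map s l.2).

Definition BP (P : presheaf) : presheaf :=
  @Build_presheaf (fun O => Pfin (Lobj O * P (delta O))%type)
    (fun O O' s => Pfin_map (fun lp : Lobj O * P (delta O) =>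
                               (Lmap s lp.1, pmap P (deltaH s) lp.2))).

End Defs.

(* Main.v *)
Require Import Defs.
From mathcomp Require Import all_boot.
From mathcomp Require Import boolp classical_sets cardinality.
Set Implicit Arguments. Unset Strict Implicit.
Section Aux.
Local Open Scope classical_set_scope.

Lemma Pfin_eq T (A B : Pfin T) : proj1_sig A = proj1_sig B -> A = B.
Proof. by case: A => A hA; case: B => B hB /= E; subst B; congr exist. Qed.

Lemma Pfin_pb (A B C D : Type) (p1 : A -> B) (p2 : A -> C) (f : B -> D) (g : C -> D) :
  set_pullback p1 p2 f g -> injective f -> injective g ->
  set_pullback (Pfin_map p1) (Pfin_map p2) (Pfin_map f) (Pfin_map g).
Proof.
move=> [com uq] fi gi; split.
  move=> [Z hZ]; apply: Pfin_eq => /=; apply/seteqP; split.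
    by move=> d [_ [a Za <-] <-]; exists (p2 a); [exists a|rewrite com].
  by move=> d [_ [a Za <-] <-]; exists (p1 a); [exists a|rewrite com].
have p1i : injective p1.
  move=> a a' e.
  have e2 : p2 a = p2 a' by apply: gi; rewrite -!com e.
  have [a0 [_ u]] := uq (p1 a) (p2 a) (com a).
  by rewrite -(u a) // -(u a') // e e2.
move=> [X hX] [Y hY] E; have /= E1 := congr1 (@proj1_sig _ _) E.
pose Z := [set a | X (p1 a) /\ Y (p2 a)].
have finZ : finite_set Z.
  apply: (@sub_finite_set _ _ (p1 @^-1` X)); first by move=> a [].
  by apply: finite_preimage => // x y _ _; apply: p1i.
have HX : p1 @` Z = X.
  apply/seteqP; split; first by move=> _ [a [Xa _] <-].
  move=> x Xx; have : (f @` X) (f x) by exists x.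
  rewrite E1 => -[y Yy e].
  have [a [[e1 e2] _]] := uq x y (esym e).
  by exists a => //; split; rewrite ?e1 ?e2.
have HY : p2 @` Z = Y.
  apply/seteqP; split; first by move=> _ [a [_ Ya] <-].
  move=> y Yy; have : (g @` Y) (g y) by exists y.
  rewrite -E1 => -[x Xx e].
  have [a [[e1 e2] _]] := uq x y e.
  by exists a => //; split; rewrite ?e1 ?e2.
exists (exist _ Z finZ); split.
  by split; apply: Pfin_eq.
move=> [Z' hZ'] [H1 H2].
have /= F1 := congr1 (@proj1_sig _ _) H1.
have /= F2 := congr1 (@proj1_sig _ _) H2.
apply: Pfin_eq => /=; apply/seteqP; split.
  move=> a [Xa _]; move: Xa; rewrite -F1 => -[z Zz e].
  by rewrite -(p1i _ _ e).
move=> z Zz; split; [rewrite -F1|rewrite -F2]; by exists z.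
Qed.

End Aux.

Section S.
Variable Act : finType.

Definition pt (l : Act) : LPoset Act :=
  @Build_LPoset Act unit (fun _ _ => true) (fun _ => erefl)
    (fun x y _ _ => match x, y with tt, tt => erefl end)
    (fun _ _ _ _ _ => erefl) (fun _ => l).

Definition ptH (O : LPoset Act) (l : Act) (b : O) (e : lab b = l) : Hom (pt l) O :=
  @Build_Hom Act (pt l) O (fun _ => b) (fun _ _ => ple_refl b) (fun _ => e).

Lemma pb_set (A B C D : LPoset Act) (p1 : Hom A B) (p2 : Hom A C) (f : Hom B D) (g : Hom C D) :
  is_pullback p1 p2 f g -> set_pullback p1 p2 f g.
Proof.
move=> [com U]; split => // b c e.
have lc : lab c = lab b by rewrite -(hlab g) -e hlab.
have [[u hu] _] := U _ (ptH (erefl (lab b))) (ptH lc) (fun _ => e).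
exists (u tt); split; first exact: (hu tt).
move=> a' [e1 _]; apply: (@hom_inj _ _ _ p1).
by rewrite e1 (hu tt).1.
Qed.

Lemma spb_pb (A B C D : LPoset Act) (p1 : Hom A B) (p2 : Hom A C) (f : Hom B D) (g : Hom C D) :
  set_pullback p1 p2 f g -> is_pullback p1 p2 f g.
Proof.
move=> [com uq]; split => // X h1 h2 hc; split; last first.
  move=> u u' hu hu' x; apply: (@hom_inj _ _ _ p1).
  by rewrite (hu x).1 (hu' x).1.
have ex : forall x, exists a, p1 a = h1 x /\ p2 a = h2 x.
  by move=> x; have [a [ha _]] := uq _ _ (hc x); exists a.
have [uf hu] := choice ex.
have uemb : forall x y, ple (uf x) (uf y) = ple x y.
  by move=> x y; rewrite -(hemb p1) (hu x).1 (hu y).1 hemb.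
have ulab : forall x, lab (uf x) = lab x.
  by move=> x; rewrite -(hlab p1) (hu x).1 hlab.
by exists (@Build_Hom Act X A uf uemb ulab).
Qed.

Lemma delta_spb (A B C D : LPoset Act) (p1 : Hom A B) (p2 : Hom A C) (f : Hom B D) (g : Hom C D) :
  set_pullback p1 p2 f g ->
  set_pullback (deltaH p1) (deltaH p2) (deltaH f) (deltaH g).
Proof.
move=> [com uq]; split.
  case=> [a|n] /=; first by rewrite com.
  congr inr; rewrite /dnew; congr pair; apply: val_inj => /=.
  by rewrite -!imset_comp; apply: eq_imset => x /=; rewrite com.
have p1i := @hom_inj _ _ _ p1.
have gi := @hom_inj _ _ _ g.
have uniq1 : forall u b, (deltaH p1 u = b) -> forall u', deltaH p1 u' = b -> u = u'.
  by move=> u b e u' e'; apply: (@hom_inj _ _ _ (deltaH p1)); rewrite e e'.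
move=> [b|[K l]] [c|[L l']] //= e.
  case: e => e; have [a [[e1 e2] _]] := uq b c e.
  exists (inl a); split; first by rewrite /= e1 e2.
  by move=> u [hu _]; apply: (uniq1 _ (inl b)) => //=; rewrite e1.
case: e => /(congr1 val) /= eS el; subst l'.
move/val_inj: eS => eS.
pose M := finset (fun a => p1 a \in val K).
have antM : antichain M.
  apply/forallP => x; apply/implyP; rewrite inE => xK.
  apply/forallP => y; apply/implyP; rewrite inE => yK; apply/implyP => hxy.
  have := valP K; move=> /forallP /(_ (p1 x)); rewrite xK => /forallP /(_ (p1 y)).
  by rewrite yK hemb hxy /= => /eqP /p1i ->.
have HK : [set p1 x | x in M] = val K.
  apply/setP => k; apply/imsetP/idP => [[x xM ->]|kK]; first by move: xM; rewrite inE.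
  have : f k \in [set f x | x in val K] by apply: imset_f.
  rewrite eS => /imsetP [c cL e].
  have [a [[e1 e2] _]] := uq k c e.
  by exists a; rewrite ?inE e1.
have HL : [set p2 x | x in M] = val L.
  apply/setP => c; apply/imsetP/idP => [[x xM ->]|cL].
    have : f (p1 x) \in [set f x | x in val K] by apply: imset_f; move: xM; rewrite inE.
    by rewrite eS com => /imsetP [c' c'L /gi ->].
  have : g c \in [set g x | x in val L] by apply: imset_f.
  rewrite -eS => /imsetP [k kK e].
  have [a [[e1 e2] _]] := uq k c (esym e).
  by exists a; rewrite ?inE ?e1 ?e2.
exists (inr (exist _ M antM, l)); split.
  split; congr inr; rewrite /dnew /=; congr pair; apply: val_inj => //=.
move=> u [hu _]; apply/esym; apply: (uniq1 _ _ hu) => /=.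
congr inr; rewrite /dnew /=; congr pair; apply: val_inj => //=.
Qed.

Lemma Pinj (P : presheaf Act) : preserves_pullbacks P ->
  forall (O O' : LPoset Act) (s : Hom O O'), injective (@Defs.pmap Act P O O' s).
Proof.
move=> HP O O' s.
pose idH := @Build_Hom Act O O (fun x => x) (fun _ _ => erefl) (fun _ => erefl).
have pb : is_pullback idH idH s s.
  apply: spb_pb; split => // b c /(@hom_inj _ _ _ s) <-.
  by exists b; split => // a [].
have [_ uq] := HP _ _ _ _ _ _ _ _ pb.
move=> x y e; have [a [[e1 e2] _]] := uq x y e.
by rewrite -e1 -e2.
Qed.

End S.
Local Open Scope classical_set_scope.

Lemma Pfin_inj T T' (h : T -> T') : injective h -> injective (Pfin_map h).
Proof.
move=> hi A B e; have /= E := congr1 (@proj1_sig _ _) e.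
apply: Pfin_eq; apply/seteqP; split => x Ax.
  have : (h @` proj1_sig A) (h x) by exists x.
  by rewrite E => -[y By /hi <-].
have : (h @` proj1_sig B) (h x) by exists x.
by rewrite -E => -[y By /hi <-].
Qed.

Lemma pb_prod A1 B1 C1 D1 A2 B2 C2 D2 (p1 : A1 -> B1) (p2 : A1 -> C1) (f : B1 -> D1) (g : C1 -> D1)
  (q1 : A2 -> B2) (q2 : A2 -> C2) (k : B2 -> D2) (l : C2 -> D2) :
  set_pullback p1 p2 f g -> set_pullback q1 q2 k l ->
  set_pullback (fun x => (p1 x.1, q1 x.2)) (fun x => (p2 x.1, q2 x.2))
    (fun x => (f x.1, k x.2)) (fun x => (g x.1, l x.2)).
Proof.
move=> [c1 u1] [c2 u2]; split; first by move=> [a b] /=; rewrite c1 c2.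
move=> [b1 b2] [c1' c2'] [e1 e2].
have [a [[h1 h2] v1]] := u1 _ _ e1.
have [a' [[h1' h2'] v2]] := u2 _ _ e2.
exists (a, a'); split; first by rewrite /= h1 h2 h1' h2'.
by move=> [x y] [[/= ? ?] [? ?]]; rewrite (v1 x) ?(v2 y).
Qed.

Lemma inj_prod A B A' B' (f : A -> A') (g : B -> B') :
  injective f -> injective g -> injective (fun x : A * B => (f x.1, g x.2)).
Proof. by move=> fi gi [a b] [c d] [/fi -> /gi ->]. Qed.



Theorem proposition10 (Act : finType) (P : presheaf Act) :
  is_functor P -> preserves_pullbacks P ->
  preserves_pullbacks (PfP P) /\ preserves_pullbacks (DeltaP P) /\
  preserves_pullbacks (BP P).
Proof.
move=> _ HP.
have HD : preserves_pullbacks (DeltaP P).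
  move=> A B C D p1 p2 f g pb; apply: HP; apply: spb_pb; apply: delta_spb.
  exact: pb_set.
split; [|split=> //].
  move=> A B C D p1 p2 f g pb; apply: Pfin_pb; [exact: HP| exact: Pinj..].
move=> A B C D p1 p2 f g pb; apply: Pfin_pb.
- apply: pb_prod; last exact: HD pb.
  apply: (@pb_prod _ _ _ _ _ _ _ _ id id id id).
    by split=> // b c ->; exists c; split=> // a [].
  by apply: Pfin_pb; [exact: pb_set| exact: hom_inj..].
- apply: inj_prod; last exact: (Pinj HP).
  by apply: (@inj_prod _ _ _ _ id); [move=> ?? | apply: Pfin_inj; exact: hom_inj].
- apply: inj_prod; last exact: (Pinj HP).
  by apply: (@inj_prod _ _ _ _ id); [move=> ?? | apply: Pfin_inj; exact: hom_inj].
Qed.
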